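(* Let $T$ be a collection of $3$-element subsets of $[n]$ and let $\mathcal{A}=\{U_{ijk}:\{i,j,k\}\in T\}$, a subarrangement of the $3$-equal arrangement in $\mathbb{R}^n$. Then $\mathcal{A}$ intersects every chamber of the real braid arrangement $\mathcal{B}_n$ in a codimension-$2$ subcomplex (so that, by the theorem of Davis–Januszkiewicz–Scott, the complement $\mathcal{M}_\mathcal{A}=\mathbb{R}^n-\bigcup_{H\in\mathcal{A}}H$ is a $K(\pi,1)$ space) if and only if every permutation $w=w_1w_2\cdots w_n$ of $[n]$ has some consecutive triple in $T$, i.e. there is $j$ with $\{w_j,w_{j+1},w_{j+2}\}\in T$.
   Context: $U_{ijk}=\{u\in\mathbb{R}^n:u_i=u_j=u_k\}$. The real braid arrangement $\mathcal{B}_n$ consists of the hyperplanes $u_i=u_j$, $1\le i<j\le n$; its chambers are the connected components of the complement, namely the cones $u_{w_1}>u_{w_2}>\cdots>u_{w_n}$ for permutations $w$ of $[n]$, each a simplicial cone whose faces are obtained by turning some of the inequalities $u_{w_k}>u_{w_{k+1}}$ into equalities. The theorem of Davis–Januszkiewicz–Scott states: if $\mathcal{H}$ is a simplicial real hyperplane arrangement and $\mathcal{A}$ is an arrangement of codimension-$2$ subspaces in $\mathcal{H}$ intersecting every chamber in a codimension-$2$ subcomplex, then $\mathcal{M}_\mathcal{A}$ is $K(\pi,1)$. *)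

(* Defs.v *)
From HB Require Import structures.
From mathcomp Require Import all_boot all_order all_algebra all_fingroup.
From mathcomp Require Import reals.
Set Implicit Arguments. Unset Strict Implicit. Unset Printing Implicit Defensive.
Import Order.TTheory GRing.Theory Num.Theory.
Local Open Scope ring_scope.

Section Defs.
Variables (R : realType) (n : nat).

Definition pt := 'I_n -> R.

(* The (closed) face of the closure of the chamber
   u_{w_1} > u_{w_2} > ... > u_{w_n} of the braid arrangement B_n obtained by
   turning the inequalities at the positions j in S (between positions j and
   j+1, 0-indexed) into equalities.  Its codimension is #|S|. *)
Definition braid_face (w : 'S_n) (S : {set 'I_n}) (u : pt) : Prop :=
  forall j k : 'I_n, val k = (val j).+1 ->
    u (w k) <= u (w j) /\ (j \in S -> u (w j) = u (w k)).

Definition closed_chamber (w : 'S_n) : pt -> Prop := braid_face w set0.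

Definition face_positions (S : {set 'I_n}) : Prop :=
  forall j, j \in S -> ((val j).+1 < n)%N.

Definition arr_union (T : {set {set 'I_n}}) (u : pt) : Prop :=
  exists2 t, t \in T & forall i j, i \in t -> j \in t -> u i = u j.

(* X meets the closed chamber w in a codimension-2 subcomplex: the
   intersection is a union of faces of codimension >= 2, and it contains a
   face of codimension exactly 2. *)
Definition meets_in_codim2_subcomplex (w : 'S_n) (X : pt -> Prop) : Prop :=
  (exists F : {set {set 'I_n}},
     (forall S, S \in F -> face_positions S /\ (2 <= #|S|)%N) /\
     (forall u, (X u /\ closed_chamber w u) <->
                exists2 S, S \in F & braid_face w S u)) /\
  (exists S : {set 'I_n}, [/\ face_positions S, #|S| = 2%N &
                              forall u, braid_face w S u -> X u]).

End Defs.

(* Main.v *)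
Require Import Defs.
From HB Require Import structures.
From mathcomp Require Import all_boot all_order all_algebra all_fingroup.
From mathcomp Require Import reals.
From mathcomp Require Import boolp zify.
Set Implicit Arguments. Unset Strict Implicit. Unset Printing Implicit Defensive.
Import Order.TTheory GRing.Theory Num.Theory.

Lemma sort3 (a b c : nat) : uniq [:: a; b; c] -> exists x y z,
  [/\ x < y, y < z, x \in [:: a;b;c], y \in [:: a;b;c] & z \in [:: a;b;c]].
Proof.
rewrite /= !inE negb_or => /and3P [/andP [ab ac] bc _].
have m1 : a \in [:: a;b;c] by rewrite !inE eqxx.
have m2 : b \in [:: a;b;c] by rewrite !inE eqxx ?orbT.
have m3 : c \in [:: a;b;c] by rewrite !inE eqxx ?orbT.
case: (ltngtP a b) => h1; case: (ltngtP b c) => h2; case: (ltngtP a c) => h3;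
  try (exfalso; lia).
all: first [ by exists a, b, c | by exists a, c, b | by exists b, a, c
           | by exists b, c, a | by exists c, a, b | by exists c, b, a ].
Qed.

Lemma card3E (T : finType) (t : {set T}) : #|t| = 3 ->
  exists x y z, [/\ x != y, y != z, x != z & t = [set x; y; z]].
Proof.
move=> h; have u := enum_uniq (mem t).
have e := set_enum t.
move: u e; rewrite cardE in h; move: h.
case: (enum t) => [|x [|y [|z [|]]]] //= _.
rewrite !inE negb_or => /and3P [/andP [xy xz] yz _] <-.
exists x, y, z; split => //; apply/setP => v; rewrite !inE.
by rewrite orbA.
Qed.

Section Chain.
Variable R : realType.
Lemma chain_eq (h : nat -> R) p p' : p <= p' ->
  (forall m, p <= m < p' -> h m = h m.+1) -> h p = h p'.
Proof.
move=> le H; elim: p' le H => [|p' IH] le H.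
  by have -> : p = 0 by lia.
case: (ltngtP p p'.+1) => hp; last by rewrite hp.
  rewrite IH; [|lia|move=> m hm; apply: H; lia].
  apply: H; lia.
lia.
Qed.

Lemma chain_le (h : nat -> R) a c :
  (forall m, a <= m < c -> (h m.+1 <= h m)%R) ->
  forall x y, a <= x -> x <= y -> y <= c -> (h y <= h x)%R.
Proof.
move=> H x y ax; elim: y => [|y IH] xy yc.
  by have -> : x = 0 by lia.
case: (ltngtP x y.+1) => hp; last by rewrite hp.
  apply: le_trans (IH _ _); [apply: H|lia|lia]; lia.
lia.
Qed.

Lemma chain_split (h : nat -> R) a c :
  (forall m, a <= m < c -> (h m.+1 <= h m)%R) -> h a = h c ->
  forall m, a <= m < c -> h m = h m.+1.
Proof.
move=> H E m hm; apply/eqP; rewrite eq_le; apply/andP; split; last first.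
  by apply: H.
apply: le_trans (_ : (h a <= _)%R).
  apply: (chain_le H); lia.
rewrite E; apply: (chain_le H); lia.
Qed.
End Chain.

Ltac unval1 H := let T0 := type of H in
  match T0 with context [@isSub.val_subdef nat ?P ?C ?M ?x] =>
   change (@isSub.val_subdef nat P C M x) with (nat_of_ord x) in H;
   let T1 := type of H in tryif constr_eq T0 T1 then fail else idtac end.
Ltac unvalG := match goal with |- ?G0 =>
  match G0 with context [@isSub.val_subdef nat ?P ?C ?M ?x] =>
   change (@isSub.val_subdef nat P C M x) with (nat_of_ord x);
   match goal with |- ?G1 => tryif constr_eq G0 G1 then fail else idtac end end end.
Ltac unval := repeat match goal with
 | |- _ => unvalG
 | H : @eq nat _ _ |- _ => unval1 H
 | H : is_true (leq _ _) |- _ => unval1 H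
 | H : is_true (_ && _) |- _ => unval1 H
 end.
Ltac clear_junk := repeat match goal with
 | H : is_true (in_mem _ _) |- _ => clear H
 | H : is_true (uniq _) |- _ => clear H
 | H : forall _ : _, _ |- _ => clear H
 end.
Ltac vlia := unval; clear_junk; lia.

Lemma dirB (R : realType) (n : nat) (T : {set {set 'I_n}})
  (HT : forall t, t \in T -> #|t| = 3) (w : 'S_n) (j k l : 'I_n) :
  val k = (val j).+1 -> val l = (val j).+2 -> [set w j; w k; w l] \in T ->
  meets_in_codim2_subcomplex w (@arr_union R n T).
Proof.
move=> hk hl t0T; split; last first.
  exists [set j; k]; split.
  - have ln : val l < n := ltn_ord l; move=> i; rewrite !inE => /orP [/eqP -> | /eqP ->];
    vlia.
  - by rewrite cards2; case: eqP => // /(congr1 val); rewrite hk; vlia.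
  - move=> v hv; exists [set w j; w k; w l] => // i i'.
    have hkl : val l = (val k).+1 by rewrite hl hk.
    have E1 : v (w j) = v (w k) by apply: (hv j k hk).2; rewrite !inE eqxx.
    have E2 : v (w k) = v (w l) by apply: (hv k l hkl).2; rewrite !inE eqxx orbT.
    have H : forall q, q \in [set w j; w k; w l] -> v q = v (w j).
      by move=> q; rewrite !inE => /orP [/orP [/eqP->|/eqP->]|/eqP->]; rewrite ?E1 ?E2.
    by move=> /H -> /H ->.
pose F := [set S : {set 'I_n} | `[< face_positions S /\ (2 <= #|S|)%N /\
           forall v : pt R n, braid_face w S v -> arr_union T v >]].
exists F; split.
  by move=> S; rewrite inE => /asboolP [h1 [h2 _]].
move=> u; split; last first.
  case=> S; rewrite inE => /asboolP [_ [_ hX]] hf; split; first exact: hX.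
  by move=> a b hab; have [h _] := hf a b hab; split; rewrite ?inE.
case=> [[t tT ct] ch].
pose S := [set j : 'I_n | [exists k : 'I_n, (val k == (val j).+1) && (u (w j) == u (w k))]].
have [x [y [z [xy yz xz te]]]] := card3E (HT t tT).
pose a0 := (w^-1 x)%g.
pose o m : 'I_n := insubd a0 m.
have oK m : m < n -> val (o m) = m by move=> hm; rewrite /o insubdK.
pose h (v : 'I_n -> R) m := v (w (o m)).
have hmono v : closed_chamber w v -> forall m, m.+1 < n -> (h v m.+1 <= h v m)%R.
  move=> cv m hm; have [] := cv (o m) (o m.+1); last by [].
  by rewrite !oK //; vlia.
have posE i : i = w (o (val (w^-1 i)%g)) by rewrite /o valKd permKV.
have posI i i' : val (w^-1 i)%g = val (w^-1 i')%g -> i = i'.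
  by move=> /val_inj /perm_inj.
have FC i i' : i \in t -> i' \in t -> val (w^-1 i)%g < val (w^-1 i')%g ->
    forall m, val (w^-1 i)%g <= m < val (w^-1 i')%g -> o m \in S.
  move=> it i't lt m hm.
  have ltn' : val (w^-1 i')%g < n := ltn_ord _.
  have E : forall m, val (w^-1 i)%g <= m < val (w^-1 i')%g -> h u m = h u m.+1.
    apply: chain_split.
      move=> m' hm'; apply: hmono => //; vlia.
    by rewrite /h -!posE; apply: ct.
  rewrite inE; apply/existsP; exists (o m.+1); rewrite !oK; try vlia.
  by rewrite eqxx /=; apply/eqP; apply: E.
exists S; last first.
  move=> j0 k0 hjk; split; first by have [] := ch j0 k0 hjk.
  rewrite inE => /existsP [k1 /andP [/eqP hk1 /eqP e]].
  by have -> : k0 = k1 by apply: val_inj; rewrite hk1 hjk.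
rewrite inE; apply/asboolP; split; [|split].
- move=> j0; rewrite inE => /existsP [k1 /andP [/eqP hk1 _]].
  by rewrite -hk1; apply: ltn_ord.
- have un : uniq [:: val (w^-1 x)%g; val (w^-1 y)%g; val (w^-1 z)%g].
    rewrite /= !inE negb_or; apply/and3P; split => //; [apply/andP; split|];
    apply/negP => /eqP /posI /eqP; by [rewrite (negPf xy) | rewrite (negPf xz) | rewrite (negPf yz)].
  have [x' [y' [z' [l1 l2 m1 m2 m3]]]] := sort3 un.
  have ex p : p \in [:: val (w^-1 x)%g; val (w^-1 y)%g; val (w^-1 z)%g] -> exists2 i, i \in t & val (w^-1 i)%g = p.
    rewrite !inE => /or3P [/eqP->|/eqP->|/eqP->]; [exists x|exists y|exists z] => //;
    by rewrite te !inE eqxx ?orbT.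
  have [i1 i1t e1] := ex _ m1; have [i3 i3t e3] := ex _ m3.
  have S1 : o x' \in S by apply: (FC i1 i3) => //; vlia.
  have S2 : o y' \in S by apply: (FC i1 i3) => //; vlia.
  have zn : z' < n by rewrite -e3; apply: ltn_ord.
  have ne : o x' != o y'.
    apply/negP => /eqP /(congr1 val); rewrite !oK; vlia.
  apply: leq_trans (_ : 2 <= #|[set o x'; o y']|) _; first by rewrite cards2 ne.
  apply: subset_leq_card.
  by apply/subsetP => q /set2P [->|->].
- move=> v hv; exists t => //.
  have cv : closed_chamber w v.
    by move=> a b hab; have [h1 _] := hv a b hab; split; rewrite ?inE.
  have G i i' : i \in t -> i' \in t -> val (w^-1 i)%g < val (w^-1 i')%g -> v i = v i'.
    move=> it i't lt; rewrite (posE i) (posE i').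
    apply: (chain_eq (h := h v)); first vlia.
    move=> m hm; have Sm := FC i i' it i't lt m hm.
    have bn := ltn_ord (w^-1 i')%g.
    have [_ e] := hv (o m) (o m.+1) ltac:(rewrite !oK; vlia).
    exact: e.
  move=> i i' it i't; case: (ltngtP (val (w^-1 i)%g) (val (w^-1 i')%g)) => c.
  + exact: G.
  + by apply/esym/G.
  + by rewrite (posI _ _ c).
Qed.

Lemma dirA (R : realType) (n : nat) (T : {set {set 'I_n}})
  (HT : forall t, t \in T -> #|t| = 3) (w : 'S_n) :
  meets_in_codim2_subcomplex w (@arr_union R n T) ->
  exists j k l : 'I_n,
      [/\ val k = (val j).+1, val l = (val j).+2 & [set w j; w k; w l] \in T].
Proof.
case=> _ [S [fp c2 hX]].
pose sv := [seq val i | i <- enum S].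
have svE (j : 'I_n) : (val j \in sv) = (j \in S).
  by rewrite (mem_map val_inj) mem_enum.
have svs : size sv = 2 by rewrite size_map -cardE.
pose f k := (\sum_(0 <= i < k) (i \notin sv : nat))%N.
have fS k : f k.+1 = (f k + (k \notin sv))%N by rewrite /f big_nat_recr.
have fmono k d : (f k <= f (k + d))%N.
  elim: d => [|d IH]; first by rewrite addn0.
  by rewrite addnS fS; apply: leq_trans IH (leq_addr _ _).
pose u : pt R n := fun x => (- ((f (val (w^-1 x)%g))%:R))%R.
have uf : braid_face w S u.
  move=> j k hk; rewrite /u !permK hk fS.
  split.
    by rewrite natrD opprD lerBlDr lerDl ler0n.
  by move=> jS; rewrite -svE in jS; rewrite jS addn0.
have [t tT ct] := hX u uf.
have [x [y [z [xy yz xz te]]]] := card3E (HT t tT).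
have posI i i' : val (w^-1 i)%g = val (w^-1 i')%g -> i = i'.
  by move=> /val_inj /perm_inj.
have FC i i' : i \in t -> i' \in t -> val (w^-1 i)%g < val (w^-1 i')%g ->
    forall m, val (w^-1 i)%g <= m < val (w^-1 i')%g -> m \in sv.
  move=> it i't lt m hm; apply/negP => /negP nm.
  have e : f (val (w^-1 i)%g) = f (val (w^-1 i')%g).
    by apply/eqP; rewrite -(eqr_nat R); apply/eqP; apply: oppr_inj; apply: ct.
  have h1 := fmono (val (w^-1 i)%g) (m - val (w^-1 i)%g).
  have h2 := fmono m.+1 (val (w^-1 i')%g - m.+1).
  rewrite fS nm in h2.
  have ea : (val (w^-1 i)%g + (m - val (w^-1 i)%g) = m)%N by vlia.
  have eb : (m.+1 + (val (w^-1 i')%g - m.+1) = val (w^-1 i')%g)%N by vlia.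
  rewrite ea in h1; rewrite eb in h2.
  move: h1 h2; rewrite e => h1 h2. lia.
have un : uniq [:: val (w^-1 x)%g; val (w^-1 y)%g; val (w^-1 z)%g].
  rewrite /= !inE negb_or; apply/and3P; split => //; [apply/andP; split|];
  apply/negP => /eqP /posI /eqP; by [rewrite (negPf xy) | rewrite (negPf xz) | rewrite (negPf yz)].
have [x' [y' [z' [l1 l2 m1 m2 m3]]]] := sort3 un.
have ex p : p \in [:: val (w^-1 x)%g; val (w^-1 y)%g; val (w^-1 z)%g] ->
    exists2 i, i \in t & val (w^-1 i)%g = p.
  rewrite !inE => /or3P [/eqP->|/eqP->|/eqP->]; [exists x|exists y|exists z] => //;
  by rewrite te !inE eqxx ?orbT.
have [i1 i1t e1] := ex _ m1; have [i2 i2t e2] := ex _ m2; have [i3 i3t e3] := ex _ m3.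
have hz : z' <= x'.+2.
  rewrite leqNgt; apply/negP => hlt.
  have A0 : x' \in sv by apply: (FC i1 i3) => //; vlia.
  have A1 : x'.+1 \in sv by apply: (FC i1 i3) => //; vlia.
  have A2 : x'.+2 \in sv by apply: (FC i1 i3) => //; vlia.
  have : size [:: x'; x'.+1; x'.+2] <= size sv.
    apply: uniq_leq_size.
      by rewrite /= !inE negb_or; apply/and3P; split; [apply/andP; split| |]; apply/eqP; vlia.
    by move=> q; rewrite !inE => /or3P [/eqP->|/eqP->|/eqP->].
  by rewrite svs.
exists (w^-1 i1)%g, (w^-1 i2)%g, (w^-1 i3)%g; split; [vlia|vlia|].
have -> : [set w (w^-1 i1)%g; w (w^-1 i2)%g; w (w^-1 i3)%g] = t; last by [].
rewrite !permKV; apply/eqP; rewrite eqEcard; apply/andP; split.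
  by apply/subsetP => q; rewrite !inE => /orP [/orP [/eqP->|/eqP->]|/eqP->].
have d12 : i1 != i2 by apply/negP => /eqP E; move: e1 e2; rewrite E; vlia.
have d13 : i1 != i3 by apply/negP => /eqP E; move: e1 e3; rewrite E; vlia.
have d23 : i2 != i3 by apply/negP => /eqP E; move: e2 e3; rewrite E; vlia.
rewrite (HT t tT) -setUA cardsU1 cards2 d23 !inE negb_or d12 d13.
by [].
Qed.


Theorem corollary6p3 (R : realType) (n : nat) (T : {set {set 'I_n}})
  (HT : forall t, t \in T -> #|t| = 3) :
  (forall w : 'S_n, meets_in_codim2_subcomplex w (@arr_union R n T)) <->
  (forall w : 'S_n, exists j k l : 'I_n,
      [/\ val k = (val j).+1, val l = (val j).+2 & [set w j; w k; w l] \in T]).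
Proof.
split => H w.
  exact: (@dirA R n T HT w (H w)).
have [j [k [l [hk hl hT]]]] := H w.
exact: (@dirB R n T HT w j k l hk hl hT).
Qed.
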